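(* Let $(X,<)$ be a linearly ordered set. For all non-principal ultrafilters $u,v$ over $X$, $$(u\,\tilde<\,v\ \vee\ u\,\tilde>\,v)\ \wedge\ \neg(u\,\tilde<\,v\ \wedge\ u\,\tilde>\,v).$$ More precisely, if $\mathrm{supp}(u)\ne\mathrm{supp}(v)$ then $$u\,\tilde<\,v\iff v\,\tilde>\,u\iff\neg(v\,\tilde<\,u)\iff\neg(u\,\tilde>\,v)\iff\mathrm{supp}(u)<\mathrm{supp}(v),$$ and if $\mathrm{supp}(u)=\mathrm{supp}(v)$ then $$u\,\tilde<\,v\iff\neg(u\,\tilde>\,v)\iff \mathrm{supp}(u)=\mathrm{supp}(v)=I_u=I_v,$$ $$u\,\tilde>\,v\iff\neg(u\,\tilde<\,v)\iff \mathrm{supp}(u)=\mathrm{supp}(v)=J_u=J_v.$$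
   Context: $\beta X$ is the set of ultrafilters over $X$; $\tilde x=\{S\subseteq X:x\in S\}$. For a binary relation $R$ on $X$, $u\,\tilde R\,v\iff\{x\in X:\{y\in X:x\,R\,y\}\in v\}\in u$; here $R$ is $<$ or $>$. $I_u=\bigcap\{I\in u: I\text{ initial segment of }X\}$, $J_u=\bigcap\{J\in u: J\text{ final segment of }X\}$; for non-principal $u$ exactly one of $I_u\in u$, $J_u\in u$ holds. Supports: $\mathrm{supp}(\tilde x)=\{x\}$; for non-principal $u$, $\mathrm{supp}(u)$ is $I_u$ regarded as a left half-cut if $I_u\in u$, and $J_u$ regarded as a right half-cut if $J_u\in u$; supports are equal iff of the same kind and equal as sets. ''$\mathrm{supp}(u)=\mathrm{supp}(v)=I_u=I_v$'' means $u,v$ non-principal, $I_u\in u$, $I_v\in v$, $I_u=I_v$; similarly for $J$. Order on supports: $\{x\}<\{y\}$ iff $x<y$; $\{x\}<I$ iff $x\in I$, $I<\{x\}$ iff $x\notin I$; $\{x\}<J$ iff $x\notin J$, $J<\{x\}$ iff $x\in J$; $I<I'$ iff $I\subsetneq I'$; $J<J'$ iff $J\supsetneq J'$; $I<J$ iff $I\cap J=\emptyset$, $J<I$ iff $I\cap J\ne\emptyset$. *)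

(* Defs.v *)
From Stdlib Require Import Classical ClassicalEpsilon.

Set Implicit Arguments.

Definition strict_linear_order (X : Type) (lt : X -> X -> Prop) : Prop :=
  (forall x, ~ lt x x) /\
  (forall x y z, lt x y -> lt y z -> lt x z) /\
  (forall x y, lt x y \/ x = y \/ lt y x).

Definition setfam (X : Type) := (X -> Prop) -> Prop.

Definition ultrafilter (X : Type) (u : setfam X) : Prop :=
  u (fun _ => True) /\
  ~ u (fun _ => False) /\
  (forall A B : X -> Prop, u A -> (forall x, A x -> B x) -> u B) /\
  (forall A B : X -> Prop, u A -> u B -> u (fun x => A x /\ B x)) /\
  (forall A : X -> Prop, u A \/ u (fun x => ~ A x)).

Definition principal (X : Type) (u : setfam X) : Prop :=
  exists x : X, forall S : X -> Prop, u S <-> S x.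

Definition tilde (X : Type) (R : X -> X -> Prop) (u v : setfam X) : Prop :=
  u (fun x => v (fun y => R x y)).

Definition gtr (X : Type) (lt : X -> X -> Prop) : X -> X -> Prop :=
  fun x y => lt y x.

Definition initial_seg (X : Type) (lt : X -> X -> Prop) (I : X -> Prop) : Prop :=
  forall x y, lt y x -> I x -> I y.

Definition final_seg (X : Type) (lt : X -> X -> Prop) (J : X -> Prop) : Prop :=
  forall x y, lt x y -> J x -> J y.

Definition I_of (X : Type) (lt : X -> X -> Prop) (u : setfam X) : X -> Prop :=
  fun z => forall I, initial_seg lt I -> u I -> I z.

Definition J_of (X : Type) (lt : X -> X -> Prop) (u : setfam X) : X -> Prop :=
  fun z => forall J, final_seg lt J -> u J -> J z.

(* Supports: a point, a left half-cut (initial segment), a right half-cut (final segment). *)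
Inductive supp_t (X : Type) : Type :=
| SPt : X -> supp_t X
| SLeft : (X -> Prop) -> supp_t X
| SRight : (X -> Prop) -> supp_t X.
Arguments SPt {X}.
Arguments SLeft {X}.
Arguments SRight {X}.

Definition supp (X : Type) (lt : X -> X -> Prop) (u : setfam X) : supp_t X :=
  match excluded_middle_informative (principal u) with
  | left H => SPt (proj1_sig (constructive_indefinite_description _ H))
  | right _ =>
      if excluded_middle_informative (u (I_of lt u))
      then SLeft (I_of lt u) else SRight (J_of lt u)
  end.

Definition supp_eq (X : Type) (s t : supp_t X) : Prop :=
  match s, t return Prop with
  | SPt x, SPt y => x = y
  | SLeft L, SLeft K => forall z, L z <-> K z
  | SRight J, SRight J' => forall z, J z <-> J' z
  | _, _ => False
  end.

Definition supp_lt (X : Type) (lt : X -> X -> Prop) (s t : supp_t X) : Prop :=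
  match s, t return Prop with
  | SPt x, SPt y => lt x y
  | SPt x, SLeft L => L x
  | SLeft L, SPt x => ~ L x
  | SPt x, SRight J => ~ J x
  | SRight J, SPt x => J x
  | SLeft L, SLeft K => (forall z, L z -> K z) /\ exists z, K z /\ ~ L z
  | SRight J, SRight J' => (forall z, J' z -> J z) /\ exists z, J z /\ ~ J' z
  | SLeft L, SRight J => forall z, ~ (L z /\ J z)
  | SRight J, SLeft L => exists z, L z /\ J z
  end.

(* Main.v *)
Require Import Defs.
From Stdlib Require Import Classical ClassicalEpsilon.
Set Implicit Arguments.

Lemma uf_mono X (u : setfam X) : ultrafilter u ->
  forall A B : X -> Prop, u A -> (forall x, A x -> B x) -> u B.
Proof. intros (_&_&H&_); exact H. Qed.

Lemma uf_ext X (u : setfam X) : ultrafilter u ->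
  forall A B : X -> Prop, (forall x, A x <-> B x) -> (u A <-> u B).
Proof. intros Hu A B H; split; intro; eapply uf_mono; eauto; firstorder. Qed.

Lemma uf_ne X (u : setfam X) : ultrafilter u -> forall A, u A -> exists x, A x.
Proof.
  intros Hu A HA. apply NNPP; intro Hn. pose proof Hu as (_&H0&_).
  apply H0. eapply uf_mono; [exact Hu| exact HA|].
  intros x Ax; apply Hn; eauto.
Qed.

Lemma uf_and X (u : setfam X) : ultrafilter u ->
  forall A B, u A -> u B -> u (fun x => A x /\ B x).
Proof. intros (_&_&_&H&_); exact H. Qed.

Lemma uf_not X (u : setfam X) : ultrafilter u -> forall A, u (fun x => ~ A x) <-> ~ u A.
Proof.
  intros Hu A; split.
  - intros H1 H2. destruct (uf_ne Hu _ (uf_and Hu _ _ H1 H2)) as [x [h1 h2]]; tauto.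
  - intros H. destruct Hu as (_&_&_&_&H5). destruct (H5 A); tauto.
Qed.

Lemma uf_single X (u : setfam X) : ultrafilter u -> ~ principal u ->
  forall x, ~ u (fun y => y = x).
Proof.
  intros Hu Hnp x Hx. apply Hnp. exists x. intro S; split.
  - intro HS. destruct (uf_ne Hu _ (uf_and Hu _ _ HS Hx)) as [y [h1 h2]]. subst; auto.
  - intro HS. eapply uf_mono; eauto. intros y ->; auto.
Qed.

Lemma uf_three X (lt : X -> X -> Prop) (u : setfam X) :
  strict_linear_order lt -> ultrafilter u -> ~ principal u ->
  forall x, ~ u (fun y => lt x y) -> u (fun y => lt y x).
Proof.
  intros (Hir&Htr&Htot) Hu Hnp x H.
  apply (proj2 (uf_not Hu _)) in H.
  pose proof (proj2 (uf_not Hu _) (uf_single Hu Hnp x)) as H2.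
  eapply uf_mono; [exact Hu| exact (uf_and Hu _ _ H H2)|].
  intros y [h1 h2]. destruct (Htot x y) as [|[|]]; subst; tauto.
Qed.

Lemma I_char X (lt : X -> X -> Prop) (v : setfam X) :
  strict_linear_order lt -> ultrafilter v -> ~ principal v ->
  forall x, v (fun y => lt x y) <-> I_of lt v x.
Proof.
  intros Hl Hv Hnp x; split.
  - intros H I HI HvI. destruct (uf_ne Hv _ (uf_and Hv _ _ HvI H)) as [y [h1 h2]].
    exact (HI y x h2 h1).
  - intro H. apply NNPP; intro Hn. pose proof (uf_three Hl Hv Hnp x Hn) as H2.
    destruct Hl as (Hir&Htr&_).
    apply (Hir x). apply (H (fun y => lt y x)); auto.
    intros a b hab hax. eauto.
Qed.

Lemma J_char X (lt : X -> X -> Prop) (v : setfam X) :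
  strict_linear_order lt -> ultrafilter v -> ~ principal v ->
  forall x, v (fun y => lt y x) <-> J_of lt v x.
Proof.
  intros Hl Hv Hnp x; split.
  - intros H J HJ HvJ. destruct (uf_ne Hv _ (uf_and Hv _ _ HvJ H)) as [y [h1 h2]].
    exact (HJ y x h2 h1).
  - intro H. apply NNPP; intro Hn.
    assert (H2 : v (fun y => lt x y)).
    { apply NNPP; intro Hn2. exact (Hn (uf_three Hl Hv Hnp x Hn2)). }
    destruct Hl as (Hir&Htr&_).
    apply (Hir x). apply (H (fun y => lt x y)); auto.
    intros a b hab hax. eauto.
Qed.

Lemma IJ X (lt : X -> X -> Prop) (v : setfam X) :
  strict_linear_order lt -> ultrafilter v -> ~ principal v ->
  forall x, J_of lt v x <-> ~ I_of lt v x.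
Proof.
  intros Hl Hv Hnp x. rewrite <- (I_char Hl Hv Hnp), <- (J_char Hl Hv Hnp).
  split.
  - intros H1 H2. destruct (uf_ne Hv _ (uf_and Hv _ _ H1 H2)) as [y [h1 h2]].
    destruct Hl as (Hir&Htr&_). exact (Hir x (Htr _ _ _ h2 h1)).
  - intro H. exact (uf_three Hl Hv Hnp x H).
Qed.

Lemma I_init X (lt : X -> X -> Prop) (v : setfam X) : initial_seg lt (I_of lt v).
Proof. intros x y hxy Hx I HI HvI. exact (HI x y hxy (Hx I HI HvI)). Qed.

Lemma J_final X (lt : X -> X -> Prop) (v : setfam X) : final_seg lt (J_of lt v).
Proof. intros x y hxy Hx J HJ HvJ. exact (HJ x y hxy (Hx J HJ HvJ)). Qed.

Lemma init_cmp X (lt : X -> X -> Prop) (I K : X -> Prop) :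
  strict_linear_order lt -> initial_seg lt I -> initial_seg lt K ->
  (forall z, I z -> K z) \/ (forall z, K z -> I z).
Proof.
  intros (_&_&Htot) HI HK. apply NNPP; intro H.
  apply not_or_and in H as [H1 H2].
  apply not_all_ex_not in H1 as [a Ha]. apply not_all_ex_not in H2 as [b Hb].
  apply imply_to_and in Ha as [Ia Ka]. apply imply_to_and in Hb as [Kb Ib].
  destruct (Htot a b) as [h|[h|h]]; subst; eauto.
Qed.

Lemma final_cmp X (lt : X -> X -> Prop) (I K : X -> Prop) :
  strict_linear_order lt -> final_seg lt I -> final_seg lt K ->
  (forall z, I z -> K z) \/ (forall z, K z -> I z).
Proof.
  intros (_&_&Htot) HI HK. apply NNPP; intro H.
  apply not_or_and in H as [H1 H2].
  apply not_all_ex_not in H1 as [a Ha]. apply not_all_ex_not in H2 as [b Hb].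
  apply imply_to_and in Ha as [Ia Ka]. apply imply_to_and in Hb as [Kb Ib].
  destruct (Htot a b) as [h|[h|h]]; subst; eauto.
Qed.

Lemma supp_L X (lt : X -> X -> Prop) (u : setfam X) :
  ~ principal u -> u (I_of lt u) -> supp lt u = SLeft (I_of lt u).
Proof.
  intros Hnp H. unfold supp.
  destruct (excluded_middle_informative (principal u)); [tauto|].
  destruct (excluded_middle_informative (u (I_of lt u))); tauto.
Qed.

Lemma supp_R X (lt : X -> X -> Prop) (u : setfam X) :
  ~ principal u -> ~ u (I_of lt u) -> supp lt u = SRight (J_of lt u).
Proof.
  intros Hnp H. unfold supp.
  destruct (excluded_middle_informative (principal u)); [tauto|].
  destruct (excluded_middle_informative (u (I_of lt u))); tauto.
Qed.

Lemma tilde_lt X (lt : X -> X -> Prop) (u v : setfam X) :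
  strict_linear_order lt -> ultrafilter u -> ultrafilter v -> ~ principal v ->
  tilde lt u v <-> u (I_of lt v).
Proof. intros Hl Hu Hv Hnp. unfold tilde, gtr. apply uf_ext; auto. apply I_char; auto. Qed.

Lemma tilde_gt X (lt : X -> X -> Prop) (u v : setfam X) :
  strict_linear_order lt -> ultrafilter u -> ultrafilter v -> ~ principal v ->
  tilde (gtr lt) u v <-> u (J_of lt v).
Proof. intros Hl Hu Hv Hnp. unfold tilde, gtr. apply uf_ext; auto. apply J_char; auto. Qed.

Lemma uJ X (lt : X -> X -> Prop) (u v : setfam X) :
  strict_linear_order lt -> ultrafilter u -> ultrafilter v -> ~ principal v ->
  u (J_of lt v) <-> ~ u (I_of lt v).
Proof.
  intros Hl Hu Hv Hnp. rewrite <- uf_not by auto. apply uf_ext; auto. apply IJ; auto.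
Qed.

Unset Implicit Arguments.

Theorem corollary1 (X : Type) (lt : X -> X -> Prop)
  (Hlin : strict_linear_order lt)
  (u v : setfam X)
  (Hu : ultrafilter u) (Hv : ultrafilter v)
  (Hnpu : ~ principal u) (Hnpv : ~ principal v) :
  ((tilde lt u v \/ tilde (gtr lt) u v) /\ ~ (tilde lt u v /\ tilde (gtr lt) u v)) /\
  (~ supp_eq (supp lt u) (supp lt v) ->
     (tilde lt u v <-> tilde (gtr lt) v u) /\
     (tilde (gtr lt) v u <-> ~ tilde lt v u) /\
     (~ tilde lt v u <-> ~ tilde (gtr lt) u v) /\
     (~ tilde (gtr lt) u v <-> supp_lt lt (supp lt u) (supp lt v))) /\
  (supp_eq (supp lt u) (supp lt v) ->
     (tilde lt u v <-> ~ tilde (gtr lt) u v) /\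
     (~ tilde (gtr lt) u v <->
        (u (I_of lt u) /\ v (I_of lt v) /\ forall z, I_of lt u z <-> I_of lt v z)) /\
     (tilde (gtr lt) u v <-> ~ tilde lt u v) /\
     (~ tilde lt u v <->
        (u (J_of lt u) /\ v (J_of lt v) /\ forall z, J_of lt u z <-> J_of lt v z))).
Proof.
  rewrite (tilde_lt Hlin Hu Hv Hnpv), (tilde_gt Hlin Hu Hv Hnpv),
    (tilde_lt Hlin Hv Hu Hnpu), (tilde_gt Hlin Hv Hu Hnpu),
    (uJ Hlin Hu Hv Hnpv), (uJ Hlin Hv Hu Hnpu).
  pose proof (IJ Hlin Hu Hnpu) as IJu. pose proof (IJ Hlin Hv Hnpv) as IJv.
  pose proof (uJ Hlin Hu Hu Hnpu) as uJu. pose proof (uJ Hlin Hv Hv Hnpv) as vJv.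
  pose proof (uJ Hlin Hu Hv Hnpv) as uJv. pose proof (uJ Hlin Hv Hu Hnpu) as vJu.
  pose proof (@I_init X lt u) as Iiu. pose proof (@I_init X lt v) as Iiv.
  pose proof (@J_final X lt u) as Jfu. pose proof (@J_final X lt v) as Jfv.
  pose proof (init_cmp Hlin Iiu Iiv) as CI. pose proof (final_cmp Hlin Jfu Jfv) as CJ.
  set (Iu := I_of lt u) in *. set (Iv := I_of lt v) in *.
  set (Ju := J_of lt u) in *. set (Jv := J_of lt v) in *.
  assert (mu : forall A B, u A -> (forall x, A x -> B x) -> u B) by exact (uf_mono Hu).
  assert (mv : forall A B, v A -> (forall x, A x -> B x) -> v B) by exact (uf_mono Hv).
  assert (neu : forall A B, u A -> u B -> exists z, A z /\ B z)
    by (intros A B h1 h2; exact (uf_ne Hu _ (uf_and Hu _ _ h1 h2))).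
  assert (nev : forall A B, v A -> v B -> exists z, A z /\ B z)
    by (intros A B h1 h2; exact (uf_ne Hv _ (uf_and Hv _ _ h1 h2))).
  assert (sIu : forall I, initial_seg lt I -> u I -> forall z, Iu z -> I z)
    by (intros I HI H z Hz; exact (Hz I HI H)).
  assert (sIv : forall I, initial_seg lt I -> v I -> forall z, Iv z -> I z)
    by (intros I HI H z Hz; exact (Hz I HI H)).
  assert (sJu : forall J, final_seg lt J -> u J -> forall z, Ju z -> J z)
    by (intros J HJ H z Hz; exact (Hz J HJ H)).
  assert (sJv : forall J, final_seg lt J -> v J -> forall z, Jv z -> J z)
    by (intros J HJ H z Hz; exact (Hz J HJ H)).
  assert (nsub : forall A B : X -> Prop, ~ (forall z, A z -> B z) -> exists z, A z /\ ~ B z).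
  { intros A B H. apply not_all_ex_not in H as [z Hz]. apply imply_to_and in Hz. eauto. }
  destruct (classic (u Iu)) as [LU|RU]; destruct (classic (v Iv)) as [LV|RV].
  - rewrite (supp_L lt Hnpu LU), (supp_L lt Hnpv LV); simpl.
    assert (A : u Iv <-> forall z, Iu z -> Iv z) by
      (split; [apply sIu; auto | intro; eapply mu; eauto]).
    split; [clear -Hu; split; tauto|]. split.
    + intro Hne. fold Iu Iv in Hne.
      assert (B : v Iu <-> forall z, Iv z -> Iu z) by
        (split; [apply sIv; auto | intro; eapply mv; eauto]).
      destruct CI as [S1|S2].
      * assert (N : ~ forall z, Iv z -> Iu z) by (intro S2; apply Hne; intro z; split; auto).
        pose proof (nsub _ _ N) as E.
        clear -A B S1 N E. tauto.
      * assert (N : ~ forall z, Iu z -> Iv z) by (intro S1; apply Hne; intro z; split; auto).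
        clear -A B S2 N. tauto.
    + intro Heq. fold Iu Iv in Heq. pose proof (mu Iu Iv LU (fun z hz => proj1 (Heq z) hz)) as HIv.
      assert (nJu : ~ u Ju) by (intro h; exact (proj1 uJu h LU)). clear -HIv nJu LU LV Heq. tauto.
  - rewrite (supp_L lt Hnpu LU), (supp_R lt Hnpv RV); simpl.
    assert (A : u Iv <-> forall z, Iu z -> Iv z) by
      (split; [apply sIu; auto | intro; eapply mu; eauto]).
    assert (D : (forall z, ~ (Iu z /\ Jv z)) <-> forall z, Iu z -> Iv z).
    { split; intros H z.
      - intro h. apply NNPP; intro n. apply (H z). split; auto. apply IJv; auto.
      - intros [h1 h2]. apply (proj1 (IJv z) h2). auto. }
    assert (K : (forall z, Iu z -> Iv z) <-> ~ v Iu).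
    { split.
      - intros H h. apply RV. eapply mv; eauto.
      - intros H. assert (hJ : v Ju) by (apply vJu; auto).
        assert (hJv : v Jv) by (apply vJv; auto).
        intros z hz. apply NNPP; intro n.
        pose proof (sJv Ju Jfu hJ z (proj2 (IJv z) n)) as h.
        exact (proj1 (IJu z) h hz). }
    split; [clear -Hu; split; tauto|]. split.
    + intro Hne. clear -A D K. tauto.
    + intros [].
  - rewrite (supp_R lt Hnpu RU), (supp_L lt Hnpv LV); simpl.
    assert (hJu : u Ju) by (apply uJu; auto).
    assert (E : (exists z, Iv z /\ Ju z) <-> u Iv).
    { split.
      - intros [z [h1 h2]]. apply NNPP; intro n.
        pose proof (sJu Jv Jfv (proj2 uJv n) z h2) as h.
        exact (proj1 (IJv z) h h1).
      - intro h. exact (neu _ _ h hJu). }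
    assert (K : u Iv <-> ~ v Iu).
    { split.
      - intros h h'. destruct (neu _ _ h hJu) as [z [h1 h2]].
        exact (proj1 (IJu z) h2 (sIv Iu Iiu h' z h1)).
      - intro h. apply E. destruct (nev _ _ (proj2 vJu h) LV) as [z [h1 h2]]. eauto. }
    split; [clear -Hu; split; tauto|]. split.
    + intro Hne. clear -E K. tauto.
    + intros [].
  - rewrite (supp_R lt Hnpu RU), (supp_R lt Hnpv RV); simpl.
    assert (hJu : u Ju) by (apply uJu; auto).
    assert (hJv : v Jv) by (apply vJv; auto).
    assert (A : u Jv <-> forall z, Ju z -> Jv z) by
      (split; [apply sJu; auto | intro; eapply mu; eauto]).
    assert (B : v Ju <-> forall z, Jv z -> Ju z) by
      (split; [apply sJv; auto | intro; eapply mv; eauto]).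
    split; [clear -Hu; split; tauto|]. split.
    + intro Hne. fold Ju Jv in Hne. destruct CJ as [S1|S2].
      * assert (N : ~ forall z, Jv z -> Ju z) by (intro S2; apply Hne; intro z; split; auto).
        clear -A B S1 N uJv vJu. tauto.
      * assert (N : ~ forall z, Ju z -> Jv z) by (intro S1; apply Hne; intro z; split; auto).
        pose proof (nsub _ _ N) as E.
        clear -A B S2 N E uJv vJu. tauto.
    + intro Heq. fold Ju Jv in Heq.
      pose proof (mu Ju Jv hJu (fun z hz => proj1 (Heq z) hz)) as HJv.
      clear -HJv uJv RU hJu hJv Heq. tauto.
Qed.
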